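(* Let $I\colon T_{\mathrm{Graph}}\leadsto T$ be an open interpretation, where $T$ is a canonical theory. Let $T'$ be the theory obtained from the disjoint union $T_{\mathrm{Graph}}\cup T$ (with $E$ the predicate symbol of $T_{\mathrm{Graph}}$) by adding the axiom $\forall x\forall y\,(E(x,y)\leftrightarrow I(E)(x,y))$. Let $\mathcal{L}$ be the language of $T'$ and let $\mathcal{F}$ be a family of canonical structures on $\mathcal{L}$ such that $T'=\mathrm{Forb}_{T_{\mathcal L}}(\mathcal F)$. Then $$\chi(I)=\begin{cases}\infty, & \text{if } \mathcal{C}^E_{\mathcal L}\not\subseteq\mathcal{U}_1(\mathcal F),\\ \min\{\ell\in\mathbb{N}_+:\mathcal{T}^E_{\ell,\mathcal L}\subseteq\mathcal U_\ell(\mathcal F)\}, & \text{otherwise},\end{cases}$$ and in the second case the minimum exists (the set is non-empty). Furthermore, if $T$ itself is obtained from a theory $T_{\mathrm{Graph}}\cup T_0$ by adding axioms (so its language contains $E$) and $I$ acts identically on $E$ (i.e. $I(E)(x,y)=E(x,y)$), then the same conclusion holds with $T'$ replaced by $T$ (with $\mathcal L$ the language of $T$ and $\mathcal F$ such that $T=\mathrm{Forb}_{T_{\mathcal L}}(\mathcal F)$).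
   Context: All languages are finite first-order relational languages; each predicate $P$ has arity $k(P)\in\mathbb{N}_+$. Structures are finite and canonical (no predicate holds on a tuple with a repeated entry); $V(M)$ is the vertex set, $(V)_k$ the set of injective maps $[k]\to V$, $R_P(M)\subseteq(V(M))_{k(P)}$ the tuples satisfying $P$, $M|_U$ the induced substructure. Theories are universal and canonical. $T_{\mathcal L}$ is the theory whose models are all canonical structures on $\mathcal L$; for a family $\mathcal F$ of canonical structures on $\mathcal L$, $\mathrm{Forb}_{T_{\mathcal L}}(\mathcal F)$ is the theory whose models are the canonical structures on $\mathcal L$ with no induced substructure isomorphic to a member of $\mathcal F$. $T_1\cup T_2$ denotes the theory over the disjoint union of the languages with the axioms of both. $T_{\mathrm{Graph}}$: language $\{E\}$, $E$ binary, symmetric; models are simple graphs. An open interpretation $I\colon T_{\mathrm{Graph}}\leadsto T$ assigns to $E$ a quantifier-free formula $I(E)(x,y)$ in the language of $T$ such that $T$ proves it symmetric and irreflexive; $I(N)$ is the graph on $V(N)$ with ordered edges the injective pairs satisfying $I(E)$. $\mathcal M_n[T]$: models of $T$ on $n$ vertices up to isomorphism. $T_{n,\ell}$: complete $\ell$-partite graph on $n$ vertices with parts of sizes $\lfloor n/\ell\rfloor$ or $\lceil n/\ell\rceil$; $G\subseteq H$ means an injection $V(G)\to V(H)$ mapping edges to edges. Abstract chromatic number: $\chi(I)=\sup(\{\ell\in\mathbb{N}_+:\forall n\ \exists N\in\mathcal M_n[T],\ T_{n,\ell}\subseteq I(N)\}\cup\{0\})+1$. Split orders: an $\ell$-split order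 over $V$ is $(f,\preceq)$ with $f\colon V\to[\ell]$ and $\preceq$ a reflexive partial order on $V$ such that $v,w$ are comparable iff $f(v)=f(w)$; $\mathcal S_{\ell,V}$ is the set of these, $\mathcal S_{\ell,k}=\mathcal S_{\ell,[k]}$ (for $\ell=1$, elements of $\mathcal S_{1,V}$ are identified with total orders on $V$). For an injection $g\colon W\to V$, $w_1\preceq_g w_2\iff g(w_1)\preceq g(w_2)$. An $\ell$-Ramsey pattern on $\mathcal L$ is a map $Q\colon P\mapsto Q_P\subseteq\mathcal S_{\ell,k(P)}$; $\mathcal P_{\ell,\mathcal L}$ is the set of these. $M$ is $Q$-uniform w.r.t. $(f,\preceq)\in\mathcal S_{\ell,V(M)}$ if $R_P(M)=\{\alpha\in(V(M))_{k(P)}:(f\circ\alpha,\preceq_\alpha)\in Q_P\}$ for all $P\in\mathcal L$. $\mathcal U_\ell(M)$ is the set of $Q\in\mathcal P_{\ell,\mathcal L}$ such that $M$ is $Q$-uniform w.r.t. some $(f,\preceq)\in\mathcal S_{\ell,V(M)}$; $\mathcal U_\ell(\mathcal F)=\bigcup_{M\in\mathcal F}\mathcal U_\ell(M)$. For $E\in\mathcal L$ binary: $\mathcal C^E_{\mathcal L}$ is the set of $Q\in\mathcal P_{1,\mathcal L}$ with $Q_E=\mathcal S_{1,2}$ ($E$-complete patterns); $\mathcal T^E_{\ell,\mathcal L}$ is the set of $Q\in\mathcal P_{\ell,\mathcal L}$ with $Q_E=\{(g,\preceq)\in\mathcal S_{\ell,2}: g\text{ injective}\}$ ($E$-Turán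 patterns). *)

(* Defs.v *)
From mathcomp Require Import all_boot.

Set Implicit Arguments.
Unset Strict Implicit.
Unset Printing Implicit Defensive.

Record lang := Lang {
  sym : finType;
  arity : sym -> nat;
  arity_pos : forall P, 0 < arity P
}.

Definition atom (L : lang) (V : finType) :=
  {P : sym L & {ffun 'I_(arity P) -> V}}.

(* A (finite) structure on L with vertex set V: the set of all tagged tuples
   (P, alpha) with alpha in R_P(M). *)
Definition struct (L : lang) (V : finType) := {set atom L V}.

Definition holds (L : lang) (V : finType) (M : struct L V) (P : sym L)
  (t : {ffun 'I_(arity P) -> V}) : bool :=
  existT (fun P => {ffun 'I_(arity P) -> V}) P t \in M.

Definition canonical (L : lang) (V : finType) (M : struct L V) : Prop :=
  forall x, x \in M -> injective (tagged x).

(* Pull-back of M along g : W -> V; for injective g this is (an isomorphic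
   copy of) the induced substructure M|_{g(W)}. *)
Definition pull (L : lang) (V W : finType) (M : struct L V) (g : W -> V)
  : struct L W :=
  [set x : atom L W |
     existT (fun P => {ffun 'I_(arity P) -> V}) (tag x)
            [ffun i => g (tagged x i)] \in M].

(* A (canonical, universal) theory over L, represented by its finite models:
   T n N <-> N (a structure on vertex set [n]) is a model of T.
   Universal theories are exactly those whose (finite) model classes are
   closed under induced substructures (and isomorphism); canonical theories
   only have canonical models. *)
Definition is_theory (L : lang) (T : forall n, struct L 'I_n -> Prop) : Prop :=
  (forall n (N : struct L 'I_n), T n N -> canonical N) /\
  (forall n m (N : struct L 'I_n) (g : 'I_m -> 'I_n),
      T n N -> injective g -> T m (pull N g)).

Definition sfamily (L : lang) := forall m, struct L 'I_m -> Prop.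

Definition canonical_family (L : lang) (F : sfamily L) : Prop :=
  forall m (N : struct L 'I_m), F m N -> canonical N.

Definition Forb (L : lang) (F : sfamily L) (V : finType) (M : struct L V) : Prop :=
  canonical M /\
  ~ (exists m (N : struct L 'I_m) (g : 'I_m -> V),
        F m N /\ injective g /\ pull M g = N).

(* Quantifier-free formulas in the two free variables x (=0) and y (=1). *)
Inductive qf2 (L : lang) : Type :=
| QAtom (P : sym L) (f : 'I_(arity P) -> 'I_2)
| QEq (i j : 'I_2)
| QNot (p : qf2 L)
| QAnd (p q : qf2 L)
| QOr (p q : qf2 L).

Fixpoint eval_qf (L : lang) (V : finType) (M : struct L V) (env : 'I_2 -> V)
  (p : qf2 L) : bool :=
  match p with
  | QAtom P f => holds M [ffun i => env (f i)]
  | QEq i j => env i == env j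
  | QNot p => ~~ eval_qf M env p
  | QAnd p q => eval_qf M env p && eval_qf M env q
  | QOr p q => eval_qf M env p || eval_qf M env q
  end.

Definition env2 (V : Type) (a b : V) : 'I_2 -> V :=
  fun i => if val i == 0 then a else b.

(* I(E) is an open interpretation T_Graph ~> T: T proves I(E) symmetric and
   irreflexive (for universal T it suffices to check finite models). *)
Definition open_interp (L : lang) (T : forall n, struct L 'I_n -> Prop)
  (phi : qf2 L) : Prop :=
  forall n (N : struct L 'I_n), T n N ->
    forall a b : 'I_n,
      eval_qf N (env2 a b) phi = eval_qf N (env2 b a) phi /\
      ~~ eval_qf N (env2 a a) phi.

Definition interp_edge (L : lang) (V : finType) (phi : qf2 L) (M : struct L V)
  (a b : V) : bool := (a != b) && eval_qf M (env2 a b) phi.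

(* Turan graph T_{n,l} on [n]: parts are residue classes mod l
   (sizes floor(n/l) or ceil(n/l)). *)
Definition turan_edge (l n : nat) (i j : 'I_n) : bool := (i %% l != j %% l).

Definition turan_in (l n : nat) (V : finType) (H : V -> V -> bool) : Prop :=
  exists h : 'I_n -> V, injective h /\
    forall i j, turan_edge l i j -> H (h i) (h j).

Definition chi_good (L : lang) (T : forall n, struct L 'I_n -> Prop)
  (phi : qf2 L) (l : nat) : Prop :=
  forall n, exists N : struct L 'I_n, T n N /\ turan_in l n (interp_edge phi N).

(* chi_eq T phi c  <->  chi(I) = c, where c = None stands for infinity and
   chi(I) = sup({l >= 1 | chi_good l} U {0}) + 1. *)
Definition chi_eq (L : lang) (T : forall n, struct L 'I_n -> Prop)
  (phi : qf2 L) (c : option nat) : Prop :=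
  match c with
  | None => forall m, exists l, m <= l /\ 0 < l /\ chi_good T phi l
  | Some c => 0 < c /\ (c.-1 = 0 \/ chi_good T phi c.-1) /\
              (forall l, 0 < l -> chi_good T phi l -> l <= c.-1)
  end.

(* Split orders: (f, <=) with f : V -> [l] and <= a reflexive partial order
   on V such that v, w are comparable iff f v = f w. *)
Definition splitord (V : finType) (l : nat) :=
  ({ffun V -> 'I_l} * {ffun V * V -> bool})%type.

Definition is_split (V : finType) (l : nat) (s : splitord V l) : bool :=
  [forall v, s.2 (v, v)] &&
  [forall v, forall w, s.2 (v, w) && s.2 (w, v) ==> (v == w)] &&
  [forall u, forall v, forall w, s.2 (u, v) && s.2 (v, w) ==> s.2 (u, w)] &&
  [forall v, forall w, (s.2 (v, w) || s.2 (w, v)) == (s.1 v == s.1 w)].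

Definition split_pull (V : finType) (l k : nat) (s : splitord V l)
  (alpha : 'I_k -> V) : splitord 'I_k l :=
  ([ffun i => s.1 (alpha i)], [ffun p => s.2 (alpha p.1, alpha p.2)]).

Definition pattern (L : lang) (l : nat) :=
  forall P : sym L, {set splitord 'I_(arity P) l}.

Definition valid_pattern (L : lang) (l : nat) (Q : pattern L l) : Prop :=
  forall P, forall s, s \in Q P -> is_split s.

Definition uniform (L : lang) (l : nat) (V : finType) (M : struct L V)
  (Q : pattern L l) (s : splitord V l) : Prop :=
  forall P (t : {ffun 'I_(arity P) -> V}),
    holds M t = injectiveb t && (split_pull s t \in Q P).

Definition in_U (L : lang) (l : nat) (F : sfamily L) (Q : pattern L l) : Prop :=
  valid_pattern Q /\
  exists m (N : struct L 'I_m), F m N /\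
    exists s : splitord 'I_m l, is_split s /\ uniform N Q s.

Definition E_complete (L : lang) (E : sym L) (Q : pattern L 1) : Prop :=
  valid_pattern Q /\ Q E = [set s | is_split s].

Definition E_turan (L : lang) (E : sym L) (l : nat) (Q : pattern L l) : Prop :=
  valid_pattern Q /\ Q E = [set s | is_split s && injectiveb s.1].

Definition C_sub_U1 (L : lang) (E : sym L) (F : sfamily L) : Prop :=
  forall Q : pattern L 1, E_complete E Q -> in_U F Q.

Definition T_sub_U (L : lang) (E : sym L) (F : sfamily L) (l : nat) : Prop :=
  forall Q : pattern L l, E_turan E Q -> in_U F Q.

Definition chi_formula (L : lang) (E : sym L) (F : sfamily L)
  (L' : lang) (T : forall n, struct L' 'I_n -> Prop) (phi : qf2 L') : Prop :=
  (~ C_sub_U1 E F -> chi_eq T phi None) /\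
  (C_sub_U1 E F ->
     exists l, (0 < l /\ T_sub_U E F l) /\
       (forall l', 0 < l' -> T_sub_U E F l' -> l <= l') /\
       chi_eq T phi (Some l)).

(* The language L0 + {E}: E is None (binary), P in L0 is Some P. *)
Lemma langE_arity_pos (L0 : lang) :
  forall o : option (sym L0), 0 < (if o is Some P then arity P else 2).
Proof. by case=> [P|] //; apply: arity_pos. Qed.

Definition langE (L0 : lang) : lang :=
  @Lang (option (sym L0)) (fun o => if o is Some P then arity P else 2)
        (@langE_arity_pos L0).

Definition reduct (L0 : lang) (V : finType) (M : struct (langE L0) V)
  : struct L0 V :=
  [set x : atom L0 V | @holds (langE L0) V M (Some (tag x)) (tagged x)].

Definition Eholds (L0 : lang) (V : finType) (M : struct (langE L0) V) (a b : V)
  : bool := @holds (langE L0) V M None [ffun i : 'I_2 => env2 a b i].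

(* Models of T' = (T_Graph U T) + forall x y (E(x,y) <-> I(E)(x,y)). *)
Definition modelT' (L0 : lang) (T : forall n, struct L0 'I_n -> Prop)
  (phi : qf2 L0) n (M : struct (langE L0) 'I_n) : Prop :=
  canonical M /\
  (forall a b, Eholds M a b = Eholds M b a) /\
  T n (reduct M) /\
  (forall a b, Eholds M a b = eval_qf (reduct M) (env2 a b) phi).

Definition Eformula (L : lang) (E : sym L) : qf2 L :=
  QAtom (fun i : 'I_(arity E) => @inord 1 (val i)).

(* Main.v *)
Require Import Defs.
From mathcomp Require Import all_boot zify.
From Stdlib Require Import Classical.
Set Implicit Arguments. Unset Strict Implicit. Unset Printing Implicit Defensive.


Lemma size_sum_count (C : finType) (f : nat -> C) (Z : seq nat) :
  size Z = \sum_(c : C) count (fun z => f z == c) Z.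
Proof.
elim: Z => [|z Z IH] /=; first by rewrite big1.
rewrite big_split /= -IH (bigD1 (f z)) //= eqxx big1 ?addn0 ?add1n // => c /negbTE.
by rewrite eq_sym => ->.
Qed.

Lemma pigeon (C : finType) (f : nat -> C) (Z : seq nat) m (c1 : C) :
  #|C| * m <= size Z -> exists c, m <= count (fun z => f z == c) Z.
Proof.
move=> hZ.
case: (boolP [exists c, m <= count (fun z => f z == c) Z]) => [/existsP[c hc]|hn].
  by exists c.
exfalso; move: hZ; rewrite (size_sum_count f).
case: m hn => [|m] hn.
  by move=> _; move/negP: hn; apply; apply/existsP; exists c1.
have: \sum_(c : C) count (fun z => f z == c) Z <= \sum_(c : C) m.
  apply: leq_sum => c _; rewrite -ltnS ltnNge.
  by apply/negP => h; move/negP: hn; apply; apply/existsP; exists c.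
rewrite sum_nat_const => h1 h2.
have := leq_trans h2 h1; rewrite mulnS.
have : 0 < #|C| by apply/card_gt0P; exists c1.
case: #|C| => [|k] // _.
by rewrite addnC -{2}(addn0 (_ * _)) leq_add2l.
Qed.

Definition homog (C : Type) (col : seq nat -> C) (K : nat) (Y : seq nat) (c0 : C) :=
  forall s, subseq s Y -> size s = K -> col s = c0.

Lemma ramsey (C : finType) K m : exists R, forall (X : seq nat) (col : seq nat -> C),
  R <= size X -> exists Y, [/\ subseq Y X, size Y = m & exists c0, homog col K Y c0].
Proof.
elim: K m => [|K IH] m.
  exists m => X col hX; exists (take m X); split.
  - exact: take_subseq.
  - exact: size_takel.
  by exists (col [::]) => s _ /size0nil ->.
have claim : forall j, exists H, forall (X : seq nat) (col : seq nat -> C), H <= size X ->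
   exists Z (f : nat -> C), [/\ subseq Z X, size Z = j &
     forall z s, subseq (z :: s) Z -> size s = K -> col (z :: s) = f z].
  elim=> [|j [H hH]].
    exists 0 => X col _; exists [::], (fun _ => col [::]); split => //; first exact: sub0seq.
  have [R' hR'] := IH H.
  exists R'.+1 => X col; case: X => [|x X'] //= hX.
  have [Y' [sY' zY' [c0 hc0]]] := hR' X' (fun s => col (x :: s)) hX.
  have [Z' [f [sZ' zZ' hZ']]] := hH Y' col (eq_leq (esym zY')).
  exists (x :: Z'), (fun z => if z == x then c0 else f z); split.
  - by rewrite /= eqxx (subseq_trans sZ' sY').
  - by rewrite /= zZ'.
  move=> z s /=; case: eqP => [-> hs hK|nzx hs hK].
    exact: (hc0 s (subseq_trans hs sZ') hK).
  exact: hZ'.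
have [H hH] := claim (#|C| * m).
exists H => X col hX.
have [Z [f [sZ zZ hZ]]] := hH X col hX.
have [c hc] := pigeon f (col [::]) (eq_leq (esym zZ)).
exists (take m [seq z <- Z | f z == c]); split.
- exact: subseq_trans (take_subseq _ _) (subseq_trans (filter_subseq _ _) sZ).
- by rewrite size_takel // size_filter.
exists c => [[|z s]] // hs [hK].
have hzs : subseq (z :: s) [seq z <- Z | f z == c] := subseq_trans hs (take_subseq _ _).
have : z \in [seq z <- Z | f z == c] by apply: (mem_subseq hzs); rewrite mem_head.
rewrite mem_filter => /andP[/eqP <- _].
by apply: hZ => //; apply: subseq_trans hzs (filter_subseq _ _).
Qed.

Lemma bound_fin (X : finType) (Pp : X -> nat -> Prop) :
  (forall x, exists n, Pp x n) -> (forall x n n', n <= n' -> Pp x n -> Pp x n') ->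
  exists B, forall x, Pp x B.
Proof.
move=> h1 h2.
suff [B hB] : exists B, forall x, x \in enum X -> Pp x B.
  by exists B => x; apply: hB; rewrite mem_enum.
elim: (enum X) => [|x s [B hB]]; first by exists 0.
have [n hn] := h1 x.
exists (maxn n B) => y; rewrite inE => /orP[/eqP ->|hy].
  exact: h2 (leq_maxl _ _) hn.
exact: h2 (leq_maxr _ _) (hB _ hy).
Qed.


Lemma least_ex (P : nat -> Prop) n : P n -> exists k, P k /\ forall k', P k' -> k <= k'.
Proof.
elim: n {-2}n (leqnn n) => [|N IH] n hn Pn.
  by exists n; split => // k' _; move: hn; rewrite leqn0 => /eqP ->.
case: (classic (exists k, k < n /\ P k)) => [[k [hk Pk]]|hno].
  by apply: (IH k) => //; rewrite -ltnS (leq_trans hk hn).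
exists n; split => // k' Pk'; rewrite leqNgt; apply/negP => h.
by apply: hno; exists k'.
Qed.

Lemma splitP (V : finType) l (s : splitord V l) :
  reflect [/\ forall v, s.2 (v,v),
     forall v w, s.2 (v,w) -> s.2 (w,v) -> v = w,
     forall u v w, s.2 (u,v) -> s.2 (v,w) -> s.2 (u,w) &
     forall v w, (s.2 (v,w) || s.2 (w,v)) = (s.1 v == s.1 w)] (is_split s).
Proof.
apply: (iffP idP).
  move=> /andP[/andP[/andP[/forallP h1 /forallP h2] /forallP h3] /forallP h4]; split.
  - exact: h1.
  - move=> v w a b; move/forallP: (h2 v) => /(_ w) /implyP; rewrite a b => /(_ isT).
    by move/eqP.
  - move=> u v w a b; move/forallP: (h3 u) => /(_ v) /forallP /(_ w) /implyP.
    by rewrite a b => /(_ isT).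
  - by move=> v w; move/forallP: (h4 v) => /(_ w) /eqP.
case=> h1 h2 h3 h4; rewrite /is_split.
apply/andP; split; [apply/andP; split; [apply/andP; split|]|].
- by apply/forallP.
- apply/forallP => v; apply/forallP => w; apply/implyP => /andP[a b].
  by rewrite (h2 _ _ a b).
- apply/forallP => u; apply/forallP => v; apply/forallP => w; apply/implyP => /andP[a b].
  exact: h3 a b.
- by apply/forallP => v; apply/forallP => w; rewrite h4.
Qed.

Lemma split_pull_split (V : finType) l k (s : splitord V l) (alpha : 'I_k -> V) :
  is_split s -> injective alpha -> is_split (split_pull s alpha).
Proof.
move=> /splitP[h1 h2 h3 h4] hinj; apply/splitP; rewrite /split_pull /=; split.
- by move=> v; rewrite ffunE.
- by move=> v w; rewrite !ffunE /= => a b; apply: hinj; apply: h2.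
- by move=> u v w; rewrite !ffunE /=; apply: h3.
- by move=> v w; rewrite !ffunE /= h4.
Qed.

Lemma split_pull_comp (V : finType) j l k (s : splitord V l) (g : 'I_j -> V) (t : 'I_k -> 'I_j) :
  split_pull s [ffun i => g (t i)] = split_pull (split_pull s g) t.
Proof.
by rewrite /split_pull; congr pair; apply/ffunP => x; rewrite !ffunE.
Qed.

Lemma injectiveb_comp (V W : finType) k (g : W -> V) (t : 'I_k -> W) :
  injective g -> injectiveb [ffun i => g (t i)] = injectiveb (finfun t).
Proof.
move=> hg; apply/injectiveP/injectiveP => h i j.
  by rewrite !ffunE => e; apply: h; rewrite !ffunE e.
by rewrite !ffunE => /hg e; apply: h; rewrite !ffunE.
Qed.

Definition colsplit n l (col : {ffun 'I_n -> 'I_l}) : splitord 'I_n l :=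
  (col, [ffun p => (col p.1 == col p.2) && (p.1 <= p.2)]).

Lemma colsplit_split n l (col : {ffun 'I_n -> 'I_l}) : is_split (colsplit col).
Proof.
apply/splitP; rewrite /colsplit /=; split.
- by move=> v; rewrite ffunE /= eqxx leqnn.
- move=> v w; rewrite !ffunE /= => /andP[_ a] /andP[_ b].
  by apply: val_inj; apply/eqP; rewrite eqn_leq a b.
- move=> u v w; rewrite !ffunE /= => /andP[/eqP -> a] /andP[-> b] /=.
  exact: leq_trans a b.
- move=> v w; rewrite !ffunE /= eq_sym.
  by case: (col w == col v) => //=; apply: leq_total.
Qed.

Definition s0 l m : splitord ('I_l * 'I_m)%type l :=
  ([ffun v : 'I_l * 'I_m => v.1],
   [ffun p : ('I_l * 'I_m) * ('I_l * 'I_m) => (p.1.1 == p.2.1) && (p.1.2 <= p.2.2)]).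

Lemma s0_split l m : is_split (s0 l m).
Proof.
apply/splitP; rewrite /s0 /=; split.
- by move=> v; rewrite ffunE /= eqxx leqnn.
- move=> [v1 v2] [w1 w2]; rewrite !ffunE /= => /andP[/eqP -> a] /andP[_ b].
  by congr pair; apply: val_inj; apply/eqP; rewrite eqn_leq a b.
- move=> u v w; rewrite !ffunE /= => /andP[/eqP -> a] /andP[-> b] /=.
  exact: leq_trans a b.
- move=> v w; rewrite !ffunE /= eq_sym.
  by case: (w.1 == v.1) => //=; apply: leq_total.
Qed.

Section Rank.
Variables (k l m : nat) (s : splitord 'I_k l).
Hypothesis hs : is_split s.
Hypothesis hkm : k <= m.

Definition rk (v : 'I_k) := #|[set w | s.2 (w, v) && (w != v)]|.

Lemma rk_lt v : rk v < m.
Proof.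
apply: leq_trans hkm; rewrite /rk -[X in _ < X](card_ord k) -cardsT.
apply: proper_card; apply/properP; split; first exact: subsetT.
by exists v => //; rewrite inE eqxx andbF.
Qed.

Definition hrk (v : 'I_k) : 'I_l * 'I_m := (s.1 v, Ordinal (rk_lt v)).

Lemma hrk_ord v w : s.2 (v, w) = (s.1 v == s.1 w) && (rk v <= rk w).
Proof.
case/splitP: hs => h1 h2 h3 h4.
case vw: (s.2 (v, w)).
  have -> : s.1 v == s.1 w by rewrite -h4 vw.
  rewrite /= /rk; symmetry; apply: subset_leq_card; apply/subsetP => u; rewrite !inE => /andP[a b].
  rewrite (h3 _ _ _ a vw) /=; apply/eqP => euw; move: a; rewrite euw => a.
  by move/negP: b; apply; apply/eqP; rewrite euw; apply: h2.
case ec: (s.1 v == s.1 w) => //=.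
have wv : s.2 (w, v) by move: (h4 v w); rewrite vw ec.
have nwv : w != v by apply/eqP => e; move: vw; rewrite e h1.
symmetry; apply/negbTE; rewrite -ltnNge /rk; apply: proper_card; apply/properP; split.
  apply/subsetP => u; rewrite !inE => /andP[a b]; rewrite (h3 _ _ _ a wv) /=.
  apply/eqP => euv; move: a; rewrite euv => a.
  by move: vw; rewrite a.
by exists w; rewrite !inE ?wv ?nwv // eqxx andbF.
Qed.

Lemma hrk_inj : injective hrk.
Proof.
move=> v w [e1 e2].
case/splitP: hs => h1 h2 h3 h4.
apply: h2; rewrite hrk_ord; [rewrite e1 eqxx /=|rewrite e1 eqxx /=];
by rewrite ?e2 ?leqnn // -e2 leqnn.
Qed.

Lemma hrk_pat : split_pull (s0 l m) hrk = s.
Proof.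
have ho := hrk_ord; move: ho; rewrite /hrk; case: s hs => s1 s2 hs' ho.
rewrite /split_pull /s0 /=; congr pair; apply/ffunP => x; rewrite !ffunE //=.
by case: x => v w /=; rewrite ho.
Qed.
End Rank.

Lemma idx_lt m i i' j j' : j < m -> j' < m ->
  (i * m + j < i' * m + j') = (i < i') || ((i == i') && (j < j')).
Proof.
move=> hj hj'; case: (ltngtP i i') => h /=.
- apply/idP; nia.
- apply/negbTE; rewrite -leqNgt; nia.
- by subst; rewrite ltn_add2l.
Qed.

Lemma cnt_codom k (f : 'I_k -> nat) x : injective f ->
  count (fun y => y \in codom f) (iota 0 x) = \sum_(r : 'I_k) (f r < x).
Proof.
move=> hf; elim: x => [|x IH]; first by rewrite big1.
rewrite -addn1 iotaD count_cat IH /= addn0 add0n.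
rewrite [RHS](eq_bigr (fun r => (f r < x) + (f r == x))); last first.
  by move=> r _; rewrite addn1 ltnS leq_eqVlt orbC; case: ltngtP.
rewrite big_split /=; congr addn.
case: (boolP (x \in codom f)) => [/codomP[r ->]|hx].
  rewrite (bigD1 r) //= eqxx big1 // => r' /negbTE hr'.
  by apply/eqP; rewrite eqb0; apply/negP => /eqP /hf e; move: hr'; rewrite e eqxx.
rewrite big1 // => r _; apply/eqP; rewrite eqb0; apply/negP => /eqP e.
by move: hx; rewrite -e codom_f.
Qed.

Lemma nth_filter_iota (A : pred nat) N x : A x -> x < N ->
  count A (iota 0 x) < size (filter A (iota 0 N)) /\
  nth 0 (filter A (iota 0 N)) (count A (iota 0 x)) = x.
Proof.
move=> Ax xN.
have -> : iota 0 N = iota 0 x ++ x :: iota x.+1 (N - x.+1).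
  by rewrite -{1}(subnKC (ltnW xN)) iotaD add0n -(subnSK xN).
rewrite filter_cat /= Ax size_cat /= nth_cat size_filter ltnn subnn /=.
by split => //; rewrite addnS ltnS leq_addr.
Qed.

Definition Mk (L : lang) l (V : finType) (Q : pattern L l) (s : splitord V l) : struct L V :=
  [set x : atom L V | injectiveb (tagged x) && (split_pull s (tagged x) \in Q (tag x))].

Lemma holds_Mk (L : lang) l (V : finType) (Q : pattern L l) (s : splitord V l) P t :
  holds (Mk Q s) (P := P) t = injectiveb t && (split_pull s t \in Q P).
Proof. by rewrite /holds inE. Qed.

Lemma holds_pull (L : lang) (V W : finType) (M : struct L V) (g : W -> V) P t :
  holds (pull M g) (P := P) t = holds M [ffun i => g (t i)].
Proof. by rewrite /holds inE. Qed.

Lemma canon_holds (L : lang) (V : finType) (M : struct L V) P t :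
  canonical M -> holds M (P := P) t -> injective t.
Proof. by move=> hM h; apply: (hM _ h). Qed.

Lemma Mk_Forb (L : lang) l n (F : sfamily L) (Q : pattern L l) (s : splitord 'I_n l) :
  valid_pattern Q -> is_split s -> ~ in_U F Q -> Forb F (Mk Q s).
Proof.
move=> vQ ss nU; split.
  by move=> x; rewrite inE => /andP[/injectiveP h _].
case=> m [N [g [FN [ig eN]]]]; apply: nU; split => //.
exists m, N; split => //; exists (split_pull s g); split.
  exact: split_pull_split.
move=> P t; rewrite -eN holds_pull holds_Mk injectiveb_comp // split_pull_comp.
by rewrite ffunK.
Qed.

Section Core.
Variables (Lg : lang) (l : nat).

Definition Kmax := \max_(P : sym Lg) arity P.
Definition Ccol := struct Lg ('I_l * 'I_Kmax.+1)%type.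

Definition posp k (p : splitord 'I_k l) (r : 'I_k) : nat :=
  \sum_(r' : 'I_k) ((p.1 r' < p.1 r) || ((p.1 r' == p.1 r) && p.2 (r', r) && (r' != r))).

Definition Qof (c : Ccol) : pattern Lg l := fun P =>
  [set p : splitord 'I_(arity P) l | is_split p &&
     holds c [ffun r => (p.1 r, (inord (posp p r) : 'I_Kmax.+1))]].

Lemma Qof_valid c : valid_pattern (Qof c).
Proof. by move=> P s; rewrite inE => /andP[]. Qed.

Lemma idx_inj m i i' j j' : j < m -> j' < m -> i * m + j = i' * m + j' -> i = i' /\ j = j'.
Proof. move=> hj hj' e. have : i = i' by nia. move=> ei; subst; lia. Qed.

Lemma core m : exists R, forall n (M : struct Lg 'I_n), canonical M ->
  forall a : 'I_l -> nat -> 'I_n,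
  (forall i i' y y', y < R -> y' < R -> a i y = a i' y' -> i = i' /\ y = y') ->
  exists (c0 : Ccol) (b : 'I_l * 'I_m -> 'I_n),
    [/\ injective b, forall i j, exists2 y, y < R & b (i, j) = a i y &
      forall P (t : {ffun 'I_(arity P) -> 'I_l * 'I_m}),
        holds M [ffun r => b (t r)] = injectiveb t && (split_pull (s0 l m) t \in Qof c0 P)].
Proof.
set Kb := Kmax.+1; set N := l * m.
have [R hR] := ramsey Ccol Kb (N + Kb).
exists R => n M cM a ainj.
pose col (S : seq nat) : Ccol := pull M (fun v : 'I_l * 'I_Kb => a v.1 (nth 0 S v.2)).
have [Y [sY zY [c0 hc0]]] := hR (iota 0 R) col (eq_leq (esym (size_iota 0 R))).
have uY : uniq Y := subseq_uniq sY (iota_uniq 0 R).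
have YR : forall x, x \in Y -> x < R.
  by move=> x /(mem_subseq sY); rewrite mem_iota.
have idxN : forall v : 'I_l * 'I_m, v.1 * m + v.2 < N.
  by case=> [[i hi] [j hj]] /=; rewrite /N; nia.
pose b (v : 'I_l * 'I_m) := a v.1 (nth 0 Y (v.1 * m + v.2)).
have bR : forall v : 'I_l * 'I_m, nth 0 Y (v.1 * m + v.2) < R.
  by move=> v; apply: YR; apply: mem_nth; rewrite zY; apply: ltn_addr.
exists c0, b; split.
- move=> [i j] [i' j'] e.
  have [/= ei] := ainj _ _ _ _ (bR (i,j)) (bR (i',j')) e.
  move/eqP; rewrite nth_uniq ?zY ?ltn_addr ?(idxN (i, j)) ?(idxN (i', j')) // => /eqP.
  by move/idx_inj => [] // _ /val_inj ->; rewrite ei.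
- move=> i j; exists (nth 0 Y (i * m + j)) => //; exact: (bR (i, j)).
move=> P t.
case: (boolP (injectiveb t)) => [/injectiveP tinj|tni] /=; last first.
  apply/negP => /(canon_holds cM) hinj; move/injectiveP: tni; apply => x y e.
  by apply: hinj; rewrite !ffunE e.
set p := split_pull (s0 l m) t.
have ps : is_split p by apply: split_pull_split => //; apply: s0_split.
rewrite inE ps /=.
set k := arity P.
have kK : k < Kb by rewrite ltnS /k /Kmax; exact: (leq_bigmax (F := fun P : sym Lg => arity P) P).
pose f (r : 'I_k) := (t r).1 * m + (t r).2.
have flt : forall r r', (f r' < f r) = ((p.1 r' < p.1 r) || ((p.1 r' == p.1 r) && p.2 (r', r) && (r' != r))).
  move=> r r'; rewrite /f /p /s0 /split_pull /= !ffunE /=.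
  rewrite idx_lt // val_eqE; case: (eqVneq (t r').1 (t r).1) => [e1|e1] /=; last by rewrite orbF.
  rewrite e1 ltnn /=.
  case: (eqVneq r' r) => [->|ne]; first by rewrite ltnn leqnn.
  rewrite ltn_neqAle andbC; have -> // : (t r').2 != (t r).2 :> nat.
  apply/eqP => e2; move/eqP: ne; apply; apply: tinj.
  by apply: injective_projections => //; apply: val_inj.
have finj : injective f.
  move=> r r' /idx_inj [] // e1 e2; apply: tinj.
  by apply: injective_projections; apply: val_inj.
have fN : forall r, f r < N by move=> r; apply: idxN.
pose A := fun y => y \in codom f.
have posE : forall r, posp p r = count A (iota 0 (f r)).
  by move=> r; rewrite cnt_codom //; apply: eq_bigr => r' _; rewrite flt.
have cntN : count A (iota 0 N) = k.
  rewrite cnt_codom // (eq_bigr (fun _ => 1)) ?sum1_card ?card_ord //.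
  by move=> r _; rewrite fN.
pose D := filter A (iota 0 N) ++ iota N (Kb - k).
pose S := map (nth 0 Y) D.
have sizeD : size D = Kb by rewrite size_cat size_filter cntN size_iota subnKC // ltnW.
pose pp := fun y => A y || (N <= y < N + (Kb - k)).
have eD : D = filter pp (iota 0 (size Y)).
  rewrite zY iotaD filter_cat add0n; congr cat.
    apply: eq_in_filter => y; rewrite mem_iota add0n => /andP[_ yN].
    by rewrite /pp (leqNgt N y) yN /= orbF.
  have -> : iota N Kb = iota N (Kb - k) ++ iota (N + (Kb - k)) k.
    by rewrite -iotaD subnK // ltnW.
  rewrite filter_cat.
  have -> : filter pp (iota N (Kb - k)) = iota N (Kb - k).
    apply/all_filterP; apply/allP => y; rewrite mem_iota => /andP[h1 h2].
    by rewrite /pp h1 h2 orbT.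
  rewrite (eq_in_filter (a2 := pred0)) ?filter_pred0 ?cats0 // => y.
  rewrite mem_iota => /andP[h1 h2]; rewrite /pp /=.
  have hA : A y = false.
    apply/negP => /codomP[r er]; have := fN r; rewrite -er; move: h1; lia.
  by rewrite hA /=; apply/negP => /andP[_]; move: h1; lia.
have subS : subseq S Y.
  rewrite /S eD filter_mask map_mask.
  have -> : map (nth 0 Y) (iota 0 (size Y)) = Y by exact: mkseq_nth.
  exact: mask_subseq.
have colS : col S = c0 by apply: hc0 => //; rewrite size_map sizeD.
rewrite -colS holds_pull; congr holds; apply/ffunP => r; rewrite !ffunE /=.
rewrite -/(split_pull (s0 l m) t) -/p; congr a.
have hpos := nth_filter_iota (A := A) (codom_f f r) (fN r).
rewrite -posE in hpos; case: hpos => hpos1 hpos2.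
have hposK : posp p r < Kb.
  apply: leq_trans hpos1 _; rewrite size_filter cntN ltnW //.
rewrite inordK // /S (nth_map 0); last by rewrite sizeD.
by rewrite /D nth_cat hpos1 hpos2.
Qed.
End Core.

Lemma embed (L : lang) (F : sfamily L) l m n (M : struct L 'I_n) (b : 'I_l * 'I_m -> 'I_n)
  (Q : pattern L l) m' (N : struct L 'I_m') (s : splitord 'I_m' l) :
  injective b ->
  (forall P (t : {ffun 'I_(arity P) -> 'I_l * 'I_m}),
      holds M [ffun r => b (t r)] = injectiveb t && (split_pull (s0 l m) t \in Q P)) ->
  m' <= m -> F m' N -> is_split s -> uniform N Q s -> ~ Forb F M.
Proof.
move=> binj hb hm FN ss uN [_]; apply.
exists m', N, (fun v => b (hrk s hm v)); split => //; split.
  by move=> v w /binj /(hrk_inj ss).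
apply/setP => -[P t].
rewrite -[_ \in pull _ _]/(holds (pull M _) t) -[_ \in N]/(holds N t) holds_pull uN.
have -> : [ffun i => b (hrk s hm (t i))] = [ffun r => b ([ffun i => hrk s hm (t i)] r)].
  by apply/ffunP => r; rewrite !ffunE.
rewrite hb injectiveb_comp ?ffunK; last exact: (hrk_inj ss).
by rewrite split_pull_comp (hrk_pat ss).
Qed.

Definition Wit (L : lang) (F : sfamily L) l (Q : pattern L l) n :=
  exists m', m' <= n /\ exists N, F m' N /\ exists s : splitord 'I_m' l, is_split s /\ uniform N Q s.

Lemma in_U_Wit (L : lang) (F : sfamily L) l (Q : pattern L l) :
  in_U F Q -> exists n, Wit F Q n.
Proof.
by case=> _ [m' [N [FN [s [ss us]]]]]; exists m', m'; split => //; exists N; split => //; exists s.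
Qed.

Lemma Wit_mono (L : lang) (F : sfamily L) l (Q : pattern L l) n n' :
  n <= n' -> Wit F Q n -> Wit F Q n'.
Proof. by move=> le [m' [hm rest]]; exists m'; split => //; exact: leq_trans hm le. Qed.

Section Gen.
Variables (Lg : lang) (E : sym Lg) (F : sfamily Lg).
Hypothesis hE : arity E = 2.

Definition Eh (V : finType) (M : struct Lg V) (a b : V) := eval_qf M (env2 a b) (Eformula E).

Lemma E0 : 0 < arity E. Proof. by rewrite hE. Qed.
Lemma E1 : 1 < arity E. Proof. by rewrite hE. Qed.
Definition e0 := Ordinal E0.
Definition e1 := Ordinal E1.

Lemma ord2 (r : 'I_(arity E)) : r = e0 \/ r = e1.
Proof.
have h : val r < 2 by rewrite -[X in _ < X]hE ltn_ord.
case: r h => [[|[|x]] h'] //= _; [left|right]; exact: val_inj.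
Qed.

Lemma e01 : e0 != e1. Proof. by []. Qed.
Lemma e10 : (e1 == e0) = false. Proof. by []. Qed.

Lemma EhE (V : finType) (M : struct Lg V) (t : {ffun 'I_(arity E) -> V}) :
  holds M t = Eh M (t e0) (t e1).
Proof.
rewrite /Eh /=; congr holds; apply/ffunP => r; rewrite ffunE /env2; by case: (ord2 r) => [er|er]; rewrite er -[\val _]/(nat_of_ord _) inordK.
Qed.

Lemma inj2 (X : eqType) (t : {ffun 'I_(arity E) -> X}) : injectiveb t = (t e0 != t e1).
Proof.
apply/injectiveP/idP => [h|h x y].
  by apply/eqP => /h /eqP; rewrite (negbTE e01).
by case: (ord2 x) => [->|->]; case: (ord2 y) => [->|->] // e; move: h; rewrite e eqxx.
Qed.

Lemma Eh_refl (V : finType) (M : struct Lg V) x : canonical M -> Eh M x x = false.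
Proof.
move=> cM; have := EhE M [ffun _ => x]; rewrite !ffunE => <-.
apply/negP => /(canon_holds cM) h; have := h e0 e1; rewrite !ffunE => /(_ erefl) /eqP.
by rewrite (negbTE e01).
Qed.

Lemma stepA : C_sub_U1 E F -> exists R1, forall n (M : struct Lg 'I_n), Forb F M ->
  forall w : nat -> 'I_n,
  ~ (forall y y', y < R1 -> y' < R1 -> y != y' -> Eh M (w y) (w y')).
Proof.
move=> hC.
have hex : forall c : Ccol Lg 1, exists n, E_complete E (@Qof Lg 1 c) -> Wit F (@Qof Lg 1 c) n.
  move=> c; case: (classic (E_complete E (@Qof Lg 1 c))) => h.
    by have [n hn] := in_U_Wit (hC _ h); exists n.
  by exists 0 => /h.
have [B hB] := bound_fin hex (fun c n n' le h hE' => Wit_mono le (h hE')).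
set m := B.+2.
have [R hR] := core Lg 1 m.
exists R => n M FM w hw.
have cM := FM.1.
have ainj : forall (i i' : 'I_1) y y', y < R -> y' < R -> w y = w y' -> i = i' /\ y = y'.
  move=> i i' y y' hy hy' e; split; first by rewrite (ord1 i) (ord1 i').
  have [//|ne] := eqVneq y y'; have := hw y y' hy hy' ne; rewrite e Eh_refl //.
have [c0 [b [binj hba hb]]] := hR n M cM (fun _ y => w y) ainj.
have hb' : forall v : 'I_1 * 'I_m, exists2 y, y < R & b v = w y by move=> [i j]; exact: hba.
have EC : E_complete E (@Qof Lg 1 c0).
  split; first exact: Qof_valid.
  apply/setP => s; rewrite [RHS]inE.
  case: (boolP (is_split s)) => ss; last by rewrite inE (negbTE ss).
  have hkm : arity E <= m by rewrite hE.
  pose t := [ffun r => hrk s hkm r].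
  have tinj : injectiveb t by apply/injectiveP => x y; rewrite !ffunE; apply: (hrk_inj ss).
  have := hb E t; rewrite tinj /=.
  have -> : split_pull (s0 1 m) t = split_pull (s0 1 m) (hrk s hkm).
    by rewrite /split_pull; congr pair; apply/ffunP => x; rewrite !ffunE.
  rewrite (hrk_pat ss) => <-; rewrite EhE !ffunE.
  have [y0 hy0 ey0] := hb' (hrk s hkm e0).
  have [y1 hy1 ey1] := hb' (hrk s hkm e1).
  rewrite ey0 ey1; apply: hw => //; apply/eqP => e.
  have : b (hrk s hkm e0) = b (hrk s hkm e1) by rewrite ey0 ey1 e.
  by move/binj/(hrk_inj ss)/eqP; rewrite (negbTE e01).
have [m' [hm' [N [FN [s [ss us]]]]]] := hB c0 EC.
exact: (embed binj hb (leq_trans hm' (leqW (leqnSn B))) FN ss us FM).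
Qed.

Lemma pat2 l m (t t' : {ffun 'I_(arity E) -> 'I_l * 'I_m}) :
  (t e0).1 = (t' e0).1 -> (t e1).1 = (t' e1).1 ->
  ((t e0).2 <= (t e1).2) = ((t' e0).2 <= (t' e1).2) ->
  ((t e1).2 <= (t e0).2) = ((t' e1).2 <= (t' e0).2) ->
  split_pull (s0 l m) t = split_pull (s0 l m) t'.
Proof.
move=> h0 h1 h01 h10; rewrite /split_pull; congr pair; apply/ffunP.
  by move=> r; rewrite !ffunE; case: (ord2 r) => ->.
move=> [r r']; rewrite !ffunE /=.
by case: (ord2 r) => ->; case: (ord2 r') => ->; rewrite ?h0 ?h1 ?h01 ?h10 // !leqnn.
Qed.

Hypothesis hsym : forall n (M : struct Lg 'I_n), Forb F M -> forall a b, Eh M a b = Eh M b a.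

Lemma stepB l : C_sub_U1 E F -> T_sub_U E F l -> exists R, forall n (M : struct Lg 'I_n),
  Forb F M -> forall a : 'I_l -> nat -> 'I_n,
  (forall i i' y y', y < R -> y' < R -> a i y = a i' y' -> i = i' /\ y = y') ->
  ~ (forall i i' y y', i != i' -> y < R -> y' < R -> Eh M (a i y) (a i' y')).
Proof.
move=> hC hT.
have [R1 hR1] := stepA hC.
have hex : forall c : Ccol Lg l, exists n, E_turan E (@Qof Lg l c) -> Wit F (@Qof Lg l c) n.
  move=> c; case: (classic (E_turan E (@Qof Lg l c))) => h.
    by have [n hn] := in_U_Wit (hT _ h); exists n.
  by exists 0 => /h.
have [B hB] := bound_fin hex (fun c n n' le h hE' => Wit_mono le (h hE')).
set m := (B + R1).+2.
have [R hR] := core Lg l m.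
exists R => n M FM a ainj hcross.
have cM := FM.1.
have [c0 [b [binj hba hb]]] := hR n M cM a ainj.
have hb' : forall v : 'I_l * 'I_m, exists2 y, y < R & b v = a v.1 y by move=> [i j]; exact: hba.
pose T2 (x y : 'I_l * 'I_m) := [ffun r : 'I_(arity E) => if r == e0 then x else y].
have T2E : forall x y, Eh M (b x) (b y) = holds M [ffun r => b (T2 x y r)].
  by move=> x y; rewrite EhE !ffunE eqxx e10.
have same : forall (c : 'I_l) (u u' j j' : 'I_m), u < u' -> j < j' ->
    Eh M (b (c, j)) (b (c, j')) -> Eh M (b (c, u)) (b (c, u')).
  move=> c u u' j j' hu hj; rewrite !T2E !hb.
  have i2 : forall (x x' : 'I_m), x < x' -> injectiveb (T2 (c, x) (c, x')).
    move=> x x' hx; rewrite inj2 !ffunE eqxx e10.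
    by apply/eqP => -[] e; move: hx; rewrite e ltnn.
  rewrite !i2 //= (@pat2 _ _ (T2 (c, u) (c, u')) (T2 (c, j) (c, j'))) //;
    rewrite !ffunE ?eqxx ?e10 //= ?(ltnW hu) ?(ltnW hj) //.
  by rewrite leqNgt hu leqNgt hj.
have ET : E_turan E (@Qof Lg l c0).
  split; first exact: Qof_valid.
  apply/setP => s; rewrite [RHS]inE.
  case: (boolP (is_split s)) => ss; last by rewrite inE (negbTE ss).
  have hkm : arity E <= m by rewrite hE.
  pose h := hrk s hkm.
  pose t := [ffun r => h r].
  have tinj : injectiveb t by apply/injectiveP => x y; rewrite !ffunE; apply: (hrk_inj ss).
  have := hb E t; rewrite tinj /=.
  have -> : split_pull (s0 l m) t = split_pull (s0 l m) h.
    by rewrite /split_pull; congr pair; apply/ffunP => x; rewrite !ffunE.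
  rewrite (hrk_pat ss) => <-; rewrite EhE !ffunE /= inj2.
  have hc : forall r, (h r).1 = s.1 r by [].
  case: (boolP (s.1 e0 != s.1 e1)) => hne.
    have [y0 hy0 ->] := hb' (h e0); have [y1 hy1 ->] := hb' (h e1).
    by apply: hcross => //; rewrite !hc.
  apply/negP => hEh.
  set c := s.1 e0.
  have ec : s.1 e1 = c by apply/eqP; rewrite eq_sym; exact: negbNE hne.
  have ee1 : h e1 = (c, (h e1).2) by rewrite -ec -hc -surjective_pairing.
  have ee0 : h e0 = (c, (h e0).2) by rewrite /c -hc -surjective_pairing.
  have jne : (h e0).2 != (h e1).2.
    apply/eqP => e; have : h e0 = h e1 by rewrite ee0 ee1 e.
    by move/(hrk_inj ss)/eqP; rewrite (negbTE e01).
  have [jlo [jhi [hlo hEhlo]]] : exists jlo jhi : 'I_m, jlo < jhi /\ Eh M (b (c, jlo)) (b (c, jhi)).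
    case: (ltngtP (h e0).2 (h e1).2) => hh; last by move/val_inj: hh jne => ->; rewrite eqxx.
      by exists (h e0).2, (h e1).2; rewrite -ee0 -ee1.
    by exists (h e1).2, (h e0).2; rewrite -ee0 -ee1 hsym.
  apply: (hR1 n M FM (fun y => b (c, inord y))) => y y' hy hy' nyy.
  have hym : y < m by rewrite /m; lia.
  have hym' : y' < m by rewrite /m; lia.
  case: (ltngtP y y') => hyy; last by move: nyy; rewrite hyy eqxx.
    by apply: (same c _ _ jlo jhi _ hlo hEhlo); rewrite !inordK.
  by rewrite /= hsym //; apply: (same c _ _ jlo jhi _ hlo hEhlo); rewrite !inordK.
have [m' [hm' [N [FN [s [ss us]]]]]] := hB c0 ET.
have hBm : B <= m by rewrite /m; lia.
exact: (embed binj hb (leq_trans hm' hBm) FN ss us FM).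
Qed.
End Gen.

Definition chi_eqG (G : nat -> Prop) (c : option nat) : Prop :=
  match c with
  | None => forall m, exists l, m <= l /\ 0 < l /\ G l
  | Some c => 0 < c /\ (c.-1 = 0 \/ G c.-1) /\
              (forall l, 0 < l -> G l -> l <= c.-1)
  end.

Lemma chi_eqE (L : lang) (T : forall n, struct L 'I_n -> Prop) phi c :
  chi_eq T phi c = chi_eqG (chi_good T phi) c.
Proof. by []. Qed.

Lemma chi_eqG_ext (G G' : nat -> Prop) c : (forall l, G l <-> G' l) -> chi_eqG G c -> chi_eqG G' c.
Proof.
move=> h; case: c => [c|] /=.
  case=> [h1 [h2 h3]]; split => //; split.
    by case: h2 => [->|/h]; [left|right].
  by move=> l l0 /h; apply: h3.
by move=> hm m; have [l [a [b /h d]]] := hm m; exists l.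
Qed.

Section Gen2.
Variables (Lg : lang) (E : sym Lg) (F : sfamily Lg).
Hypothesis hE : arity E = 2.
Hypothesis hsym : forall n (M : struct Lg 'I_n), Forb F M ->
  forall a b, Eh E M a b = Eh E M b a.

Definition chi_goodG l := forall n, exists M : struct Lg 'I_n,
  Forb F M /\ turan_in l n (fun a b => (a != b) && Eh E M a b).

Lemma T2E (V : finType) (M : struct Lg V) (x y : V) :
  Eh E M x y = holds M [ffun r : 'I_(arity E) => if r == e0 hE then x else y].
Proof. by rewrite (EhE hE) !ffunE eqxx (e10 hE). Qed.

Lemma EhMk_turan l n (Q : pattern Lg l) (col : {ffun 'I_n -> 'I_l}) i j :
  E_turan E Q -> Eh E (Mk Q (colsplit col)) i j = (col i != col j).
Proof.
case=> vQ hQ; rewrite T2E holds_Mk hQ inE (inj2 hE) !ffunE eqxx (e10 hE).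
case: (eqVneq i j) => [->|nij] /=; first by rewrite eqxx.
rewrite split_pull_split ?colsplit_split //; last first.
  by apply/injectiveP; rewrite (inj2 hE) !ffunE eqxx (e10 hE).
rewrite (inj2 hE) /split_pull /colsplit /= !ffunE eqxx (e10 hE).
by case: eqVneq => // ->; rewrite eqxx.
Qed.

Lemma EhMk_complete n (Q : pattern Lg 1) (col : {ffun 'I_n -> 'I_1}) i j :
  E_complete E Q -> Eh E (Mk Q (colsplit col)) i j = (i != j).
Proof.
case=> vQ hQ; rewrite T2E holds_Mk hQ inE (inj2 hE) !ffunE eqxx (e10 hE).
case: (eqVneq i j) => [->|nij] //=.
rewrite split_pull_split ?colsplit_split //.
by apply/injectiveP; rewrite (inj2 hE) !ffunE eqxx (e10 hE).
Qed.

Lemma good_turan l (Q : pattern Lg l) : 0 < l -> E_turan E Q -> ~ in_U F Q -> chi_goodG l.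
Proof.
move=> l0 ET nU n.
pose col := [ffun v : 'I_n => Ordinal (ltn_pmod v l0)].
exists (Mk Q (colsplit col)); split.
  exact: Mk_Forb ET.1 (colsplit_split col) nU.
exists id; split => // i j; rewrite /turan_edge => hij.
rewrite (EhMk_turan _ _ _ ET) !ffunE -val_eqE /= hij andbT.
by apply/eqP => e; move: hij; rewrite e eqxx.
Qed.

Lemma good_complete (Q : pattern Lg 1) : E_complete E Q -> ~ in_U F Q -> forall l, chi_goodG l.
Proof.
move=> EC nU l n.
pose col := [ffun v : 'I_n => (ord0 : 'I_1)].
exists (Mk Q (colsplit col)); split.
  exact: Mk_Forb EC.1 (colsplit_split col) nU.
exists id; split => // i j; rewrite /turan_edge => hij.
rewrite (EhMk_complete _ _ _ EC) andbb.
by apply/eqP => e; move: hij; rewrite e eqxx.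
Qed.


Lemma exT : C_sub_U1 E F -> exists l, 0 < l /\ T_sub_U E F l.
Proof.
move=> hC; have [R1 hR1] := stepA hE hC.
exists R1.+1; split => // Q ET.
case: (classic (in_U F Q)) => // nU; exfalso.
pose col := [ffun v : 'I_R1.+1 => v].
have FM := Mk_Forb ET.1 (colsplit_split col) nU.
apply: (hR1 _ _ FM (fun y => inord y)) => y y' hy hy' nyy.
rewrite (EhMk_turan _ _ _ ET) !ffunE; apply/eqP => /(congr1 val).
rewrite -![\val _]/(nat_of_ord _) !inordK ?(leqW hy) ?(leqW hy') // => e; move: nyy; rewrite e eqxx //.
Qed.

Theorem general : (~ C_sub_U1 E F -> chi_eqG chi_goodG None) /\
  (C_sub_U1 E F -> exists l, (0 < l /\ T_sub_U E F l) /\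
     (forall l', 0 < l' -> T_sub_U E F l' -> l <= l') /\ chi_eqG chi_goodG (Some l)).
Proof.
split.
  move=> nC; have [Q] := @not_all_ex_not _ (fun Q : pattern Lg 1 => E_complete E Q -> in_U F Q) nC.
  move=> hQ; have [EC nU] := imply_to_and _ _ hQ; rewrite /chi_eqG => m.
  by exists m.+1; split => //; split => //; apply: good_complete EC nU _.
move=> hC.
have [l1 h1] := exT hC.
have [ls [[ls0 hls] hmin]] := least_ex (P := fun l => 0 < l /\ T_sub_U E F l) h1.
exists ls; split => //; split.
  by move=> l' l0 hl'; apply: hmin.
split => //; split.
  case: (eqVneq ls.-1 0) => [->|nz]; first by left.
  right.
  have l0 : 0 < ls.-1 by rewrite lt0n.
  have nT : ~ T_sub_U E F ls.-1.
    move=> hT; have := hmin _ (conj l0 hT); rewrite leqNgt => /negP; apply.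
    by rewrite prednK // ltnSn.
  have [Q] := @not_all_ex_not _ (fun Q : pattern Lg ls.-1 => E_turan E Q -> in_U F Q) nT.
  move=> hQ; have [ET nU] := imply_to_and _ _ hQ.
  exact: good_turan l0 ET nU.
move=> l l0 hg; rewrite leqNgt; apply/negP => hl.
have hls' : ls <= l by move: hl; rewrite prednK.
have [R hR] := stepB hE hsym hC hls.
have [M [FM [h [hinj htur]]]] := hg (R * l).+1.
pose a (i : 'I_ls) (y : nat) : 'I_(R * l).+1 := h (inord (y * l + i)).
have hil : forall i : 'I_ls, i < l by move=> i; exact: leq_trans (ltn_ord i) hls'.
have hyl : forall (i : 'I_ls) y, y < R -> y * l + i < (R * l).+1.
  by move=> i y hy; have := hil i; rewrite ltnS; nia.
apply: (hR _ _ FM a).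
  move=> i i' y y' hy hy' /hinj /(congr1 val).
  rewrite -![\val _]/(nat_of_ord _) !inordK ?hyl //.
  by move/idx_inj => [] // -> /val_inj ->.
move=> i i' y y' nii hy hy'.
have := htur (inord (y * l + i)) (inord (y' * l + i')).
rewrite /turan_edge !inordK ?hyl // !modnMDl !modn_small ?hil //.
by move=> /(_ nii) /andP[].
Qed.
End Gen2.

Section Part1.
Variables (L0 : lang) (phi : qf2 L0).

Definition liftM n (N : struct L0 'I_n) : struct (langE L0) 'I_n :=
  [set x : atom (langE L0) 'I_n |
    let: existT o t := x in
    match o return {ffun 'I_(@arity (langE L0) o) -> 'I_n} -> bool with
    | Some P => fun t => holds N t
    | None => fun t => interp_edge phi N (t ord0) (t ord_max)
    end t].

Lemma holds_lift n (N : struct L0 'I_n) P t :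
  @holds (langE L0) _ (liftM N) (Some P) t = holds N t.
Proof. by rewrite /holds inE. Qed.

Lemma Eholds_lift n (N : struct L0 'I_n) a b :
  Eholds (liftM N) a b = interp_edge phi N a b.
Proof. by rewrite /Eholds /holds inE /= !ffunE. Qed.

Lemma reduct_lift n (N : struct L0 'I_n) : reduct (liftM N) = N.
Proof. by apply/setP => -[P t]; rewrite /reduct inE holds_lift. Qed.

Lemma Eh_Eholds n (M : struct (langE L0) 'I_n) a b :
  Eh (None : sym (langE L0)) M a b = Eholds M a b.
Proof.
rewrite /Eh /Eholds /=; congr holds; apply/ffunP => i; rewrite !ffunE.
by rewrite inord_val.
Qed.
End Part1.

Theorem theorem3p2 :
  (forall (L0 : lang) (T : forall n, struct L0 'I_n -> Prop) (phi : qf2 L0)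
          (F : sfamily (langE L0)),
      is_theory T ->
      open_interp T phi ->
      canonical_family F ->
      (forall n (M : struct (langE L0) 'I_n), modelT' T phi M <-> Forb F M) ->
      chi_formula (None : sym (langE L0)) F T phi)
  /\
  (forall (L : lang) (E : sym L) (T : forall n, struct L 'I_n -> Prop)
          (F : sfamily L),
      arity E = 2 ->
      is_theory T ->
      (forall n (N : struct L 'I_n), T n N -> forall a b : 'I_n,
          eval_qf N (env2 a b) (Eformula E) = eval_qf N (env2 b a) (Eformula E)) ->
      canonical_family F ->
      (forall n (M : struct L 'I_n), T n M <-> Forb F M) ->
      chi_formula E F T (Eformula E)).
Proof.
split.
  move=> L0 T phi F [isT1 isT2] hphi _ hmod.
  have hE : @arity (langE L0) None = 2 by [].
  have hsym : forall n (M : struct (langE L0) 'I_n), Forb F M ->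
      forall a b, Eh (None : sym (langE L0)) M a b = Eh (None : sym (langE L0)) M b a.
    by move=> n M /hmod [_ [hs _]] a b; rewrite !Eh_Eholds hs.
  have modlift : forall n (N : struct L0 'I_n), T n N -> modelT' T phi (liftM phi N).
    move=> n N TN; split; [|split; [|split]].
    - move=> [[P|] t]; rewrite inE /=.
        by move=> h; apply: (isT1 _ _ TN (existT _ P t)).
      rewrite /interp_edge => /andP[ne _] i j e.
      have o2 : forall k : 'I_2, k = ord0 \/ k = ord_max.
        by move=> [[|[|k]] hk] //; [left|right]; apply: val_inj.
      move: e ne; case: (o2 i) => ->; case: (o2 j) => -> // e; rewrite e eqxx //.
    - move=> a b; rewrite !Eholds_lift /interp_edge eq_sym (hphi _ _ TN a b).1 //.
    - by rewrite reduct_lift.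
    move=> a b; rewrite Eholds_lift reduct_lift /interp_edge.
    case: (eqVneq a b) => [->|] //=.
    by rewrite (negbTE (hphi _ _ TN b b).2).
  have heq : forall l, chi_goodG (None : sym (langE L0)) F l <-> chi_good T phi l.
    move=> l; split => hg n.
      have [M [FM [h [hinj ht]]]] := hg n.
      have [_ [_ [TN hE']]] := (hmod n M).2 FM.
      exists (reduct M); split => //; exists h; split => // i j /ht.
      by rewrite Eh_Eholds /interp_edge hE'.
    have [N [TN [h [hinj ht]]]] := hg n.
    exists (liftM phi N); split; first exact/hmod/modlift.
    exists h; split => // i j /ht; rewrite Eh_Eholds Eholds_lift /interp_edge.
    by case/andP => -> ->.
  have [g1 g2] := general hE hsym.
  split => [nC|hC].
    by rewrite chi_eqE; apply: chi_eqG_ext (g1 nC).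
  have [l [a [b c]]] := g2 hC; exists l; split => //; split => //.
  by rewrite chi_eqE; apply: chi_eqG_ext c.
move=> L E T F hE _ hsymT _ hTF.
have hsym : forall n (M : struct L 'I_n), Forb F M -> forall a b, Eh E M a b = Eh E M b a.
  by move=> n M /hTF TM a b; apply: hsymT.
have heq : forall l, chi_goodG E F l <-> chi_good T (Eformula E) l.
  move=> l; split => hg n.
    have [M [FM ht]] := hg n; exists M; split => //; exact/hTF.
  have [M [TM ht]] := hg n; exists M; split => //; exact/hTF.
have [g1 g2] := general hE hsym.
split => [nC|hC].
  by rewrite chi_eqE; apply: chi_eqG_ext (g1 nC).
have [l [a [b c]]] := g2 hC; exists l; split => //; split => //.
by rewrite chi_eqE; apply: chi_eqG_ext c.
Qed.
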